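(* Let $A\in\mathbb{R}^{n\times n}$ and $B\in\mathbb{R}^{r\times r}$ be symmetric positive semidefinite with $r\le n$, with eigendecompositions $A=\sum_{i=1}^{n}s_{i}u_{i}u_{i}^{T}$, $\sum_{i=1}^{n}u_{i}u_{i}^{T}=I_{n}$, $s_{1}\ge\cdots\ge s_{n}\ge0$, and $B=\sum_{i=1}^{r}d_{i}v_{i}v_{i}^{T}$, $\sum_{i=1}^{r}v_{i}v_{i}^{T}=I_{r}$, $0\le d_{1}\le\cdots\le d_{r}$. Then $$\min_{Y\in\mathbb{R}^{n\times r}}\left\{\|A-YY^{T}\|_{F}^{2}+2\langle B,Y^{T}Y\rangle\right\}=\sum_{i=1}^{n}s_{i}^{2}-\sum_{i=1}^{r}[(s_{i}-d_{i})_{+}]^{2},$$ with a minimizer $Y^{\star}=\sum_{i=1}^{r}u_{i}v_{i}^{T}\sqrt{(s_{i}-d_{i})_{+}}$.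
   Context: $\langle A,B\rangle=\mathrm{tr}(A^{T}B)$ and $x_{+}=\max\{0,x\}$. *)

(* Defs.v *)
From HB Require Import structures.
From mathcomp Require Import all_boot all_order all_algebra.
From mathcomp Require Import reals.
Set Implicit Arguments. Unset Strict Implicit. Unset Printing Implicit Defensive.
Import Order.TTheory GRing.Theory Num.Theory.
Local Open Scope ring_scope.

Definition frob2 (R : realType) (m n : nat) (M : 'M[R]_(m, n)) : R :=
  \sum_(i < m) \sum_(j < n) M i j ^+ 2.

Definition frob_inner (R : realType) (m n : nat) (A B : 'M[R]_(m, n)) : R :=
  \tr (A^T *m B).

Definition pospart (R : realType) (x : R) : R := Num.max 0 x.

(* Main.v *)
Require Import Defs.
From HB Require Import structures.
From mathcomp Require Import all_boot all_order all_algebra.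
From mathcomp Require Import reals.
From mathcomp Require Import ring lra zify.
From mathcomp.real_closed Require Import complex.
Import Order.TTheory GRing.Theory Num.Theory.
Local Open Scope ring_scope.
Set Implicit Arguments. Unset Strict Implicit. Unset Printing Implicit Defensive.


Definition dot (R : realType) k (x y : 'cV[R]_k) : R := (x^T *m y) 0 0.

Section Dot.
Variable R : realType.
Implicit Types (k : nat).

Lemma dotE k (x y : 'cV[R]_k) : dot x y = \sum_i x i 0 * y i 0.
Proof. by rewrite /dot mxE; apply: eq_bigr => i _; rewrite mxE. Qed.

Lemma dotC k (x y : 'cV[R]_k) : dot x y = dot y x.
Proof. by rewrite !dotE; apply: eq_bigr => i _; rewrite mulrC. Qed.

Lemma dotDr k (x y z : 'cV[R]_k) : dot x (y + z) = dot x y + dot x z.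
Proof. by rewrite /dot mulmxDr mxE. Qed.
Lemma dotDl k (x y z : 'cV[R]_k) : dot (y + z) x = dot y x + dot z x.
Proof. by rewrite dotC dotDr !(dotC x). Qed.
Lemma dotNr k (x y : 'cV[R]_k) : dot x (- y) = - dot x y.
Proof. by rewrite /dot mulmxN mxE. Qed.
Lemma dotNl k (x y : 'cV[R]_k) : dot (- y) x = - dot y x.
Proof. by rewrite dotC dotNr dotC. Qed.
Lemma dotBr k (x y z : 'cV[R]_k) : dot x (y - z) = dot x y - dot x z.
Proof. by rewrite dotDr dotNr. Qed.
Lemma dotBl k (x y z : 'cV[R]_k) : dot (y - z) x = dot y x - dot z x.
Proof. by rewrite dotDl dotNl. Qed.
Lemma dotZr k a (x y : 'cV[R]_k) : dot x (a *: y) = a * dot x y.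
Proof. by rewrite /dot -scalemxAr mxE. Qed.
Lemma dotZl k a (x y : 'cV[R]_k) : dot (a *: y) x = a * dot y x.
Proof. by rewrite dotC dotZr dotC. Qed.
Lemma dot_sumr k I (rr : seq I) (P : pred I) (x : 'cV[R]_k) F :
  dot x (\sum_(i <- rr | P i) F i) = \sum_(i <- rr | P i) dot x (F i).
Proof.
elim/big_rec2: _ => [|i y1 y2 _ <-]; first by rewrite /dot mulmx0 mxE.
by rewrite dotDr.
Qed.
Lemma dot_suml k I (rr : seq I) (P : pred I) (x : 'cV[R]_k) F :
  dot (\sum_(i <- rr | P i) F i) x = \sum_(i <- rr | P i) dot (F i) x.
Proof. by rewrite dotC dot_sumr; apply: eq_bigr => i _; rewrite dotC. Qed.
Lemma dot_mulmx k l (A : 'M[R]_(k, l)) x y : dot x (A *m y) = dot (A^T *m x) y.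
Proof. by rewrite /dot trmx_mul trmxK mulmxA. Qed.
Lemma dot_ge0 k (x : 'cV[R]_k) : 0 <= dot x x.
Proof. by rewrite dotE; apply: sumr_ge0 => i _; rewrite -expr2 sqr_ge0. Qed.
Lemma dot_eq0 k (x : 'cV[R]_k) : dot x x = 0 -> x = 0.
Proof.
rewrite dotE => /eqP; rewrite psumr_eq0 => [/allP H|i _]; last by rewrite -expr2 sqr_ge0.
apply/matrixP => i j; rewrite ord1 mxE.
by have := H i (mem_index_enum _); rewrite -expr2 sqrf_eq0 => /eqP.
Qed.

Lemma onb_orth k (u : 'I_k -> 'cV[R]_k) :
  \sum_(i < k) u i *m (u i)^T = 1%:M -> forall i j, dot (u i) (u j) = (i == j)%:R.
Proof.
move=> H i j.
pose U : 'M[R]_k := \matrix_(a, b) u b a 0.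
have UU : U *m U^T = 1%:M.
  rewrite -H; apply/matrixP => a b; rewrite mxE summxE; apply: eq_bigr => c _.
  by rewrite !mxE big_ord1 !mxE.
have := mulmx1C UU => /matrixP /(_ i j); rewrite !mxE dotE => <-.
by apply: eq_bigr => c _; rewrite !mxE.
Qed.

Lemma onb_parseval k (u : 'I_k -> 'cV[R]_k) (x : 'cV[R]_k) :
  \sum_(i < k) u i *m (u i)^T = 1%:M -> \sum_i dot (u i) x ^+ 2 = dot x x.
Proof.
move=> H; have -> : dot x x = dot x (1%:M *m x) by rewrite mul1mx.
rewrite -H mulmx_suml dot_sumr.
apply: eq_bigr => i _; rewrite -mulmxA dot_mulmx.
by rewrite [RHS]dotE big_ord1 expr2.
Qed.

End Dot.


Section H2.
Variable R : realType.

Lemma mul_dot k l (x : 'cV[R]_l) (y z : 'cV[R]_k) : x *m (y^T *m z) = dot y z *: x.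
Proof.
have -> : (y^T *m z) = (dot y z)%:M.
  apply/matrixP => a b. rewrite !ord1. rewrite [RHS]mxE. rewrite eqxx mulr1n //.
by rewrite mul_mx_scalar.
Qed.

Lemma onb_eig k (u : 'I_k -> 'cV[R]_k) (s : 'I_k -> R) (A : 'M[R]_k) :
  \sum_(i < k) u i *m (u i)^T = 1%:M -> A = \sum_(i < k) s i *: (u i *m (u i)^T) ->
  forall j, A *m u j = s j *: u j.
Proof.
move=> H -> j; rewrite mulmx_suml (bigD1 j) //= big1 => [|i /negbTE ij].
  by rewrite addr0 -scalemxAl -mulmxA mul_dot (onb_orth H) eqxx scale1r.
by rewrite -scalemxAl -mulmxA mul_dot (onb_orth H) ij scale0r scaler0.
Qed.

Lemma tr1 (A : 'M[R]_1) : \tr A = A 0 0.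
Proof. by rewrite /mxtrace big_ord1. Qed.

Lemma onb_trace k (u : 'I_k -> 'cV[R]_k) (X : 'M[R]_k) :
  \sum_(i < k) u i *m (u i)^T = 1%:M -> \tr X = \sum_i dot (u i) (X *m u i).
Proof.
move=> H; have -> : \tr X = \tr (X *m 1%:M) by rewrite mulmx1.
rewrite -H mulmx_sumr raddf_sum /=. apply eq_bigr => i _.
by rewrite mulmxA mxtrace_mulC tr1 /dot.
Qed.

Lemma frob2_tr m n (X : 'M[R]_(m, n)) : frob2 X = \tr (X^T *m X).
Proof.
rewrite /frob2 /mxtrace exchange_big; apply: eq_bigr => j _; rewrite mxE.
by apply: eq_bigr => i _; rewrite !mxE expr2.
Qed.

End H2.


Section H3.
Variable R : realType.

Lemma shift_sqr (F : comNzRingType) k (X : 'M[F]_k) c e :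
  (X - c%:M) *m (X - e%:M) = X *m X - (c + e) *: X + (c * e)%:M.
Proof.
rewrite mulmxBl !mulmxBr mul_mx_scalar mul_scalar_mx -scalar_mxM.
apply/matrixP => i j; rewrite !mxE; ring.
Qed.

Lemma complex_facts (z : R[i]) :
  z + conjc z = (complex.Re z + complex.Re z)%:C%C /\ z * conjc z = (complex.Re z * complex.Re z + complex.Im z ^+ 2)%:C%C.
Proof.
case: z => a b /=; split; apply/eqP; rewrite eq_complex /= ?eqxx /=.
  by rewrite subrr eqxx.
by rewrite mulrN opprK expr2 eqxx /= mulrN mulrC addrC subrr.
Qed.

Lemma sym_eigvec m (M : 'M[R]_m.+1) : M^T = M ->
  exists a, exists2 x : 'cV[R]_m.+1, dot x x = 1 & M *m x = a *: x.
Proof.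
move=> MT.
pose f := real_complex R.
pose Mc := map_mx f M.
have [z] : exists z, root (char_poly Mc) z by apply/closed_rootP; rewrite size_char_poly.
rewrite -eigenvalue_root_char => /eigenvalueP [v vM vN0].
pose a := complex.Re z; pose b := complex.Im z.
pose N := (M - a%:M) *m (M - a%:M) + (b^+2)%:M.
have /det0P [x xN0 xN] : \det N^T == 0.
  rewrite det_tr.
  have : \det (map_mx f N) == 0.
    apply/det0P; exists v => //.
    have -> : map_mx f N = (Mc - z%:M) *m (Mc - (conjc z)%:M).
      have [h1 h2] := complex_facts z.
      rewrite !shift_sqr h1 h2 /N shift_sqr !(map_mxD, map_mxB, map_mxZ, map_scalar_mx, map_mxM, map_mxN).
      rewrite -addrA; congr (_ + _); by rewrite -(raddfD (@scalar_mx _ m.+1)) -rmorphD.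
    by rewrite mulmxA (mulmxBr v) vM mul_mx_scalar subrr mul0mx.
  by rewrite det_map_mx fmorph_eq0.
pose xc := x^T.
have Nx : N *m xc = 0 by rewrite /xc -(trmxK N) -trmx_mul xN trmx0.
have MaT : (M - a%:M)^T = M - a%:M by rewrite linearB /= MT tr_scalar_mx.
pose yc := (M - a%:M) *m xc.
have H0 : dot yc yc + b ^+ 2 * dot xc xc = 0.
  have : dot xc (N *m xc) = 0 by rewrite Nx /dot mulmx0 mxE.
  rewrite /N mulmxDl dotDr -mulmxA dot_mulmx MaT -/yc mul_scalar_mx dotZr.
  by [].
have y0 : yc = 0.
  apply: dot_eq0; apply/eqP; rewrite eq_le dot_ge0 andbT -H0 lerDl.
  by rewrite mulr_ge0 ?sqr_ge0 ?dot_ge0.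
have xcN0 : xc != 0 by apply: contraNneq xN0 => h; rewrite -(trmxK x) -/xc h trmx0.
have nx : 0 < dot xc xc.
  by rewrite lt_def dot_ge0 andbT; apply/negP => /eqP /dot_eq0 h; rewrite h eqxx in xcN0.
exists a, ((Num.sqrt (dot xc xc))^-1 *: xc).
  rewrite dotZl dotZr mulrA -expr2 exprVn sqr_sqrtr ?ltW // mulVf //.
  by rewrite gt_eqF.
rewrite -scalemxAr scalerA mulrC -scalerA; congr (_ *: _).
by apply/eqP; rewrite -subr_eq0 -mul_scalar_mx -mulmxBl; apply/eqP.
Qed.
End H3.


Section H4.
Variable R : realType.

Lemma householder m (x : 'cV[R]_m.+1) : dot x x = 1 ->
  exists H : 'M[R]_m.+1, [/\ H^T = H, H *m H = 1%:M & H *m delta_mx 0 0 = x].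
Proof.
move=> x1.
pose e0 : 'cV[R]_m.+1 := delta_mx 0 0.
pose v := x - e0.
pose c := 2 / dot v v.
exists (1%:M - c *: (v *m v^T)); split.
- by rewrite linearB /= trmx1 linearZ /= trmx_mul trmxK.
- rewrite mulmxBl mul1mx mulmxBr mulmx1 -!scalemxAl -!scalemxAr mulmxA.
  rewrite -(mulmxA v) mul_dot scalemxAl scalerA -!scalemxAl.
  have -> : c *: ((c * dot v v) *: (v *m v^T)) = c *: (v *m v^T) + c *: (v *m v^T).
    have [h|h] := eqVneq (dot v v) 0.
      by rewrite /c h invr0 !mulr0 !scale0r addr0.
    rewrite /c -mulrA mulVf // mulr1 -scalerDr; congr (_ *: _).
    by rewrite scaler_nat mulr2n.
  by rewrite opprB addrK subrK.
- rewrite mulmxBl mul1mx -scalemxAl -mulmxA mul_dot -/e0.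
  have [h|h] := eqVneq (dot v v) 0.
    have v0 : v = 0 by apply: dot_eq0.
    by rewrite v0 /dot trmx0 mul0mx mxE !scaler0 subr0; apply/eqP; rewrite eq_sym -subr_eq0 -/v v0.
  have hv : dot v v = - 2 * dot v e0.
    rewrite /v !dotBl !dotBr x1 (dotC e0 x).
    have -> : dot e0 e0 = 1 by rewrite dotE (bigD1 0) //= big1 => [|i /negbTE ie]; rewrite !mxE ?ie ?eqxx ?mulr1 ?addr0 ?mul0r.
    ring.
  have -> : dot v e0 = - (dot v v) / 2.
    by rewrite hv; field.
  rewrite /c scalerA (_ : 2 / dot v v * (- dot v v / 2) = -1); last by field; rewrite ?pnatr_eq0.
  by rewrite scaleN1r opprK /v addrC subrK.
Qed.
End H4.


Section H5.
Variable R : realType.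

Lemma blk_conj m (W X : 'M[R]_m) (a : R) :
  (block_mx (1%:M : 'M_1) 0 0 W)^T *m block_mx (a%:M : 'M_1) 0 0 X *m block_mx 1%:M 0 0 W
  = block_mx a%:M 0 0 (W^T *m X *m W).
Proof.
rewrite tr_block_mx !mulmx_block !trmx0 !trmx1 !mulmx0 !mul0mx !mulmx1 !mul1mx !addr0 !add0r.
by rewrite mul0mx.
Qed.

Lemma spectral_mx m (M : 'M[R]_m) : M^T = M ->
  exists (W : 'M[R]_m) (l : 'rV[R]_m), W^T *m W = 1%:M /\ W^T *m M *m W = diag_mx l.
Proof.
elim: m M => [|m IH] M MT.
  by exists 1%:M, 0; split; apply/matrixP => [] [].
have [a [x x1 Mx]] := sym_eigvec MT.
have [H [HT HH He]] := householder x1.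
have [P defP] : {P : 'M[R]_m.+1 | P = H *m M *m H} by eexists.
have PT : P^T = P by rewrite defP !trmx_mul HT MT mulmxA.
have Pe : P *m (delta_mx 0 0 : 'cV_m.+1) = a *: delta_mx 0 0.
  by rewrite defP -mulmxA He -mulmxA Mx -scalemxAr -He mulmxA HH mul1mx.
have Pi0 : forall i, P i 0 = a * (i == 0)%:R.
  move=> i; have := congr1 (fun X : 'cV[R]_m.+1 => X i 0) Pe.
  by rewrite -colE !mxE eqxx andbT.
have P0j : forall j, P 0 j = a * (j == 0)%:R.
  by move=> j; rewrite -Pi0 -{1}PT mxE.
pose M' : 'M[R]_m := drsubmx (P : 'M_(1 + m)).
have M'T : M'^T = M'.
  by apply/matrixP => i j; rewrite !mxE -{1}PT mxE.
have [W' [l' [W'W W'M]]] := IH M' M'T.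
have Pblk : (P : 'M_(1 + m)) = block_mx a%:M 0 0 M'.
  rewrite -{1}(submxK (P : 'M_(1 + m))); congr block_mx; apply/matrixP => i j; rewrite !mxE ?ord1.
  - by rewrite (_ : lshift m 0 = 0) ?Pi0 ?eqxx ?mulr1 //; apply/val_inj.
  - rewrite (_ : lshift m 0 = 0); last by apply/val_inj.
    rewrite P0j; case: eqP => [h|_]; last by rewrite mulr0.
    by have := congr1 val h.
  - rewrite (_ : lshift m 0 = 0); last by apply/val_inj.
    rewrite Pi0; case: eqP => [h|_]; last by rewrite mulr0.
    by have := congr1 val h.
pose B : 'M[R]_(1 + m) := block_mx 1%:M 0 0 W'.
exists (H *m B), (row_mx a%:M l'); split.
  rewrite trmx_mul mulmxA -(mulmxA _ _ H) HT HH mulmx1 /B.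
  have := blk_conj W' 1%:M 1; rewrite mulmx1 W'W -!scalar_mx_block mulmx1.
  by apply.
have -> : (H *m B)^T *m M *m (H *m B) = B^T *m P *m B by rewrite defP trmx_mul HT !mulmxA.
rewrite Pblk /B blk_conj W'M (diag_mx_row (a%:M : 'rV_1) l').
suff -> : diag_mx (a%:M : 'rV_1) = a%:M by [].
apply/matrixP => i j; rewrite (ord1 i) (ord1 j) !mxE //.
Qed.
End H5.

Section H5b.
Variable R : realType.
Lemma spectral_sum m (M : 'M[R]_m) : M^T = M ->
  exists (w : 'I_m -> 'cV[R]_m) (lam : 'I_m -> R),
    \sum_k w k *m (w k)^T = 1%:M /\ M = \sum_k lam k *: (w k *m (w k)^T).
Proof.
move=> /spectral_mx [W [l [WW WMW]]].
have WW' := mulmx1C WW.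
exists (fun k => col k W), (fun k => l 0 k); split.
  rewrite -WW'; apply/matrixP => i j; rewrite summxE !mxE.
  by apply: eq_bigr => k _; rewrite !mxE big_ord1 !mxE.
have -> : M = W *m (W^T *m M *m W) *m W^T.
  by rewrite !mulmxA WW' mul1mx -mulmxA WW' mulmx1.
rewrite WMW mul_mx_diag; apply/matrixP => i j; rewrite summxE !mxE.
by apply: eq_bigr => k _; rewrite !mxE big_ord1 !mxE mulrCA mulrA.
Qed.
End H5b.


Section H6.
Variable R : realType.
Local Notation phi x := (pospart x ^+ 2).

Lemma pospartE (x : R) : pospart x = if 0 <= x then x else 0.
Proof. by rewrite /pospart maxEle. Qed.

Lemma phi_ge0 (x : R) : 0 <= phi x.
Proof. exact: sqr_ge0. Qed.

Lemma phi_tangent (x lam : R) : 0 <= lam -> lam * (2 * x - lam) <= phi x.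
Proof.
move=> hl; rewrite pospartE; case: (leP 0 x) => h.
  have := sqr_ge0 (x - lam); rewrite !expr2; nra.
have : 0 <= lam * (- x) by apply: mulr_ge0 => //; lra.
rewrite !expr2; nra.
Qed.

Lemma phi_mono (x y : R) : x <= y -> phi x <= phi y.
Proof. by move=> h; rewrite !pospartE; case: (leP 0 x) => h1; case: (leP 0 y) => h2; rewrite !expr2; nra. Qed.

Lemma phi_super (x x' y y' : R) : x' <= x -> y <= y' ->
  phi (x - y') + phi (x' - y) <= phi (x - y) + phi (x' - y').
Proof.
move=> h1 h2; rewrite !pospartE.
case: (leP 0 (x - y')) => a1; case: (leP 0 (x' - y)) => a2;
  case: (leP 0 (x - y)) => a3; case: (leP 0 (x' - y')) => a4; rewrite !expr2; nra.
Qed.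
End H6.


Definition gg (R : realType) (S D : nat -> R) (a b : nat) : R := pospart (S a - D b) ^+ 2.
Definition alpha (R : realType) (S D : nat -> R) r (a : nat) : R :=
  \sum_(a <= k < r) (gg S D k k - gg S D k.+1 k).
Definition beta (R : realType) (S D : nat -> R) r (b : nat) : R :=
  gg S D b.+1 b + \sum_(b.+1 <= k < r) (gg S D k.+1 k - gg S D k k).

Section Dual.
Variable R : realType.
Variables (S D : nat -> R) (r : nat).
Hypothesis HS : forall a b, (a <= b)%N -> S b <= S a.
Hypothesis HD : forall a b, (a <= b)%N -> (b < r)%N -> D a <= D b.
Local Notation g := (gg S D).
Local Notation al := (alpha S D r).
Local Notation be := (beta S D r).

Lemma g_super a b c e : (a <= b)%N -> (c <= e)%N -> (e < r)%N ->
  g a e + g b c <= g a c + g b e.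
Proof. by move=> ab ce er; apply: phi_super; [apply: HS | apply: HD]. Qed.

Lemma g_mono a b c : (a <= b)%N -> g b c <= g a c.
Proof. by move=> ab; apply: phi_mono; rewrite lerD2r; apply: HS. Qed.

Lemma al_ge0 a : 0 <= al a.
Proof.
rewrite /alpha; apply: sumr_ge0 => k _; rewrite subr_ge0; apply: g_mono; exact: leqnSn.
Qed.

Lemma al_geq a : (r <= a)%N -> al a = 0.
Proof. by move=> h; rewrite /alpha big_geq. Qed.

Lemma diag0 a : (a < r)%N -> al a + be a = g a a.
Proof.
move=> ar; rewrite /alpha /beta big_ltn //.
have -> : \sum_(a.+1 <= k < r) (g k.+1 k - g k k) = - \sum_(a.+1 <= k < r) (g k k - g k.+1 k).
  by rewrite -sumrN; apply: eq_bigr => k _; rewrite opprB.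
lra.
Qed.

Lemma be_step c : (c.+1 < r)%N -> be c = be c.+1 + g c.+1 c - g c.+1 c.+1.
Proof. by move=> h; rewrite /beta (big_ltn h); lra. Qed.

Lemma be_last c : c.+1 = r -> be c = g r c.
Proof. by move=> h; rewrite /beta big_geq ?h // addr0. Qed.

Lemma be_ge_gr c : (c < r)%N -> g r c <= be c.
Proof.
move=> cr; have [t] : exists t, (c + t.+1 = r)%N by exists (r - c.+1)%N; lia.
elim: t c cr => [|t IH] c cr ct.
  by rewrite be_last ?lexx //; rewrite addn1 in ct.
have c1r : (c.+1 < r)%N by lia.
have := IH c.+1 c1r; rewrite addSnnS => /(_ ct) h.
rewrite be_step //.
have := @g_super c.+1 r c c.+1 (ltnW c1r) (leqnSn c) c1r; lra.
Qed.

Lemma be_ge0 c : (c < r)%N -> 0 <= be c.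
Proof. by move=> cr; apply: le_trans (be_ge_gr cr); apply: phi_ge0. Qed.

Lemma dual_feas a c : (c < r)%N -> g a c <= al a + be c.
Proof.
move=> cr.
case: (leqP r a) => ra.
  rewrite al_geq // add0r; apply: le_trans (be_ge_gr cr); exact: g_mono.
case: (leqP a c) => ac.
  have [t ct] : exists t, c = (a + t)%N by exists (c - a)%N; lia.
  subst c; clear ac; elim: t cr => [|t IH] cr.
    by rewrite addn0 diag0 // lexx.
  have c0 : (a + t < r)%N by lia.
  have c1 : ((a + t).+1 < r)%N by lia.
  have h1 := IH c0; have h2 := be_step c1.
  have h3 := @g_super a (a + t).+1 (a + t) (a + t).+1 (ltnW (leq_ltn_trans (leq_addr t a) (leqnn _))) (leqnSn _) c1.
  rewrite addnS; lra.
have [t] : exists t, (c + t.+1 = a)%N by exists (a - c.+1)%N; lia.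
elim: t c cr ac => [|t IH] c cr ac ct.
  rewrite addn1 in ct; subst a.
  have := diag0 ra; have := be_step ra.
  have := @g_super c.+1 c.+1 c c.+1 (leqnn _) (leqnSn c) ra.
  lra.
have c1a : (c.+1 < a)%N by lia.
have c1r : (c.+1 < r)%N by apply: ltn_trans ra.
have := IH c.+1 c1r c1a; rewrite addSnnS => /(_ ct) h.
have := be_step c1r.
have := @g_super c.+1 a c c.+1 (ltnW c1a) (leqnSn c) c1r.
lra.
Qed.

Lemma dual_sum n : (r <= n)%N ->
  \sum_(a < n) al a + \sum_(b < r) be b = \sum_(b < r) g b b.
Proof.
move=> rn.
have -> : \sum_(a < n) al a = \sum_(b < r) al b.
  rewrite -(big_mkord xpredT) -(big_mkord xpredT al) (@big_cat_nat _ _ _ r 0 n _ _ (leq0n r) rn) /=.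
  rewrite [X in _ + X]big1_seq ?addr0 // => a /andP [_]; rewrite mem_index_iota => /andP [h _].
  by rewrite al_geq.
by rewrite -big_split /=; apply: eq_bigr => b _; rewrite diag0.
Qed.

End Dual.


Section Key.
Variable R : realType.

Lemma ext_val n (s : 'I_n -> R) (i : 'I_n) : \sum_(j < n | val j == val i) s j = s i.
Proof. by rewrite (big_pred1 i) // => j; rewrite /= val_eqE. Qed.

Lemma ext_out n (s : 'I_n -> R) a : (n <= a)%N -> \sum_(j < n | val j == a) s j = 0.
Proof.
move=> h; rewrite big1 // => j /eqP ja; move: (ltn_ord j); rewrite ja ltnNge h.
by [].
Qed.

Lemma dual_ord n r (hrn : (r <= n)%N) (s : 'I_n -> R) (d : 'I_r -> R) :
  (forall i j : 'I_n, (i <= j)%N -> s j <= s i) -> (forall i, 0 <= s i) ->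
  (forall i j : 'I_r, (i <= j)%N -> d i <= d j) ->
  exists (al : 'I_n -> R) (be : 'I_r -> R),
    [/\ forall i, 0 <= al i, forall j, 0 <= be j,
        forall i j, pospart (s i - d j) ^+ 2 <= al i + be j &
        \sum_i al i + \sum_j be j = \sum_(i < r) pospart (s (widen_ord hrn i) - d i) ^+ 2].
Proof.
move=> sdec s0 dinc.
pose S a := \sum_(j < n | val j == a) s j.
pose D b := \sum_(j < r | val j == b) d j.
have HS : forall a b, (a <= b)%N -> S b <= S a.
  move=> a b ab; case: (ltnP b n) => bn.
    have an : (a < n)%N by apply: leq_ltn_trans bn.
    have -> : S b = s (Ordinal bn) by exact: (ext_val s (Ordinal bn)).
    have -> : S a = s (Ordinal an) by exact: (ext_val s (Ordinal an)).
    by apply: sdec.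
  rewrite /S ext_out //; apply: sumr_ge0 => j _; exact: s0.
have HD : forall a b, (a <= b)%N -> (b < r)%N -> D a <= D b.
  move=> a b ab br; have ar : (a < r)%N by apply: leq_ltn_trans br.
  have -> : D b = d (Ordinal br) by exact: (ext_val d (Ordinal br)).
  have -> : D a = d (Ordinal ar) by exact: (ext_val d (Ordinal ar)).
  by apply: dinc.
have gE : forall (i : 'I_n) (j : 'I_r), gg S D i j = pospart (s i - d j) ^+ 2.
  by move=> i j; rewrite /gg /S /D (ext_val s i) (ext_val d j).
exists (fun i => alpha S D r i), (fun j => beta S D r j); split.
- by move=> i; apply: al_ge0.
- by move=> j; apply: be_ge0.
- by move=> i j; rewrite -gE; apply: dual_feas.
- rewrite (@dual_sum R S D r n hrn); apply: eq_bigr => i _.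
  rewrite /gg /S /D (ext_val d i).
  by rewrite (ext_val s (widen_ord hrn i)).
Qed.
End Key.


Section Key2.
Variable R : realType.

Lemma key n r (hrn : (r <= n)%N) (s : 'I_n -> R) (d : 'I_r -> R)
  (e : 'I_n -> 'I_r -> R) (q : 'I_r -> 'I_r -> R) (lam : 'I_r -> R) :
  (forall i j : 'I_n, (i <= j)%N -> s j <= s i) -> (forall i, 0 <= s i) ->
  (forall i j : 'I_r, (i <= j)%N -> d i <= d j) ->
  (forall i k, 0 <= e i k) -> (forall j k, 0 <= q j k) -> (forall k, 0 <= lam k) ->
  (forall k, \sum_i e i k = lam k) -> (forall k, \sum_j q j k = 1) ->
  (forall j, \sum_k q j k = 1) -> (forall i, \sum_k e i k / lam k <= 1) ->
  \sum_k (2 * \sum_i s i * e i k - 2 * lam k * \sum_j d j * q j k - lam k ^+ 2)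
    <= \sum_(i < r) pospart (s (widen_ord hrn i) - d i) ^+ 2.
Proof.
move=> sdec s0 dinc e0 q0 l0 se sq1 sq2 bes.
have [al [be [al0 be0 feas <-]]] := dual_ord hrn sdec s0 dinc.
have Tk : forall k, 2 * \sum_i s i * e i k - 2 * lam k * \sum_j d j * q j k - lam k ^+ 2
   = \sum_i \sum_j e i k * q j k * (2 * s i - 2 * d j - lam k).
  move=> k.
  have -> : \sum_i \sum_j e i k * q j k * (2 * s i - 2 * d j - lam k)
      = \sum_i \sum_j ((2 * (s i * e i k) - lam k * e i k) * q j k)
        - \sum_i \sum_j (2 * e i k * (d j * q j k)).
    rewrite -sumrB; apply: eq_bigr => i _; rewrite -sumrB; apply: eq_bigr => j _; ring.
  have -> : \sum_i \sum_j ((2 * (s i * e i k) - lam k * e i k) * q j k)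
      = \sum_i (2 * (s i * e i k) - lam k * e i k).
    by apply: eq_bigr => i _; rewrite -mulr_sumr sq1 mulr1.
  have -> : \sum_i \sum_j (2 * e i k * (d j * q j k)) = 2 * lam k * \sum_j d j * q j k.
    rewrite -se; under eq_bigr do rewrite -mulr_sumr. by rewrite -mulr_suml -mulr_sumr.
  by rewrite sumrB -!mulr_sumr se expr2; ring.
under eq_bigr do rewrite Tk.
have ptw : forall i j k, e i k * q j k * (2 * s i - 2 * d j - lam k)
    <= e i k / lam k * q j k * (al i + be j).
  move=> i j k.
  have [lk0|lkN0] := eqVneq (lam k) 0.
    have : e i k <= lam k.
      rewrite -se (bigD1 i) //= lerDl; apply: sumr_ge0 => ? _; exact: e0.
    rewrite lk0 => eik; have -> : e i k = 0 by apply/eqP; rewrite eq_le eik e0.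
    by rewrite !mul0r.
  have lkp : 0 < lam k by rewrite lt_def lkN0 l0.
  apply: (@le_trans _ _ (e i k / lam k * q j k * pospart (s i - d j) ^+ 2)); last first.
    by apply: ler_wpM2l; [apply: mulr_ge0; [apply: divr_ge0|] | apply: feas].
  have -> : e i k * q j k * (2 * s i - 2 * d j - lam k)
     = e i k / lam k * q j k * (lam k * (2 * (s i - d j) - lam k)).
    by field.
  apply: ler_wpM2l; first by apply: mulr_ge0; [apply: divr_ge0|].
  exact: phi_tangent.
apply: (@le_trans _ _ (\sum_k \sum_i \sum_j e i k / lam k * q j k * (al i + be j))).
  apply: ler_sum => k _; apply: ler_sum => i _; apply: ler_sum => j _; exact: ptw.
have split3 : forall (f g : 'I_r -> 'I_n -> 'I_r -> R),
    \sum_k \sum_i \sum_j (f k i j + g k i j)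
    = \sum_k \sum_i \sum_j f k i j + \sum_k \sum_i \sum_j g k i j.
  move=> f g; rewrite -big_split; apply: eq_bigr => k _.
  rewrite -big_split; apply: eq_bigr => i _; by rewrite -big_split.
have sumel : forall k, \sum_i e i k / lam k <= 1.
  move=> k; rewrite -mulr_suml se.
  have [->|h] := eqVneq (lam k) 0; first by rewrite mul0r ler01.
  by rewrite mulfV.
rewrite (eq_bigr (fun k => \sum_i \sum_j (e i k / lam k * al i * q j k
            + e i k / lam k * (q j k * be j)))); last first.
  by move=> k _; apply: eq_bigr => i _; apply: eq_bigr => j _; ring.
rewrite split3; apply: lerD.
  have -> : \sum_k \sum_i \sum_j e i k / lam k * al i * q j k
      = \sum_i al i * \sum_k e i k / lam k.
    rewrite exchange_big; apply: eq_bigr => i _; rewrite mulr_sumr.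
    by apply: eq_bigr => k _; rewrite -mulr_sumr sq1 mulr1 mulrC.
  apply: ler_sum => i _; rewrite -[X in _ <= X]mulr1; apply: ler_wpM2l => //.
have -> : \sum_k \sum_i \sum_j e i k / lam k * (q j k * be j)
    = \sum_k \sum_j (\sum_i e i k / lam k) * (q j k * be j).
  apply: eq_bigr => k _; rewrite exchange_big; apply: eq_bigr => j _.
  by rewrite mulr_suml.
apply: (@le_trans _ _ (\sum_k \sum_j q j k * be j)).
  apply: ler_sum => k _; apply: ler_sum => j _.
  rewrite -[X in _ <= X]mul1r; apply: ler_wpM2r => //; exact: mulr_ge0.
rewrite exchange_big; apply: ler_sum => j _.
by rewrite -mulr_suml sq2 mul1r.
Qed.
End Key2.


Section Final.
Variable R : realType.

Lemma f_formula n r (A : 'M[R]_n) (B : 'M[R]_r) (Y : 'M[R]_(n, r)) :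
  A^T = A -> B^T = B ->
  frob2 (A - Y *m Y^T) + 2 * frob_inner B (Y^T *m Y)
  = \tr (A *m A) - 2 * \tr (A *m (Y *m Y^T)) + \tr ((Y^T *m Y) *m (Y^T *m Y))
    + 2 * \tr (B *m (Y^T *m Y)).
Proof.
move=> AT BT; rewrite frob2_tr /frob_inner BT.
have PT : (Y *m Y^T)^T = Y *m Y^T by rewrite trmx_mul trmxK.
rewrite [(A - _)^T]raddfB /= AT PT mulmxBl !mulmxBr !raddfB /=.
rewrite (mxtrace_mulC (Y *m Y^T) A).
have -> : \tr (Y *m Y^T *m (Y *m Y^T)) = \tr (Y^T *m Y *m (Y^T *m Y)).
  by rewrite mulmxA mxtrace_mulC !mulmxA.
ring.
Qed.

Lemma pos_sq (x : R) : pospart x ^+ 2 = pospart x * x.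
Proof. by rewrite pospartE; case: (leP 0 x); rewrite ?expr2 ?mul0r. Qed.

Lemma pos_ge0 (x : R) : 0 <= pospart x.
Proof. by rewrite pospartE; case: (leP 0 x). Qed.

End Final.


Section Bessel.
Variable R : realType.

Lemma bessel r n (Y : 'M[R]_(n, r)) (w : 'I_r -> 'cV[R]_r) (lam : 'I_r -> R) (x : 'cV[R]_n) :
  (forall k l, dot (Y *m w k) (Y *m w l) = lam k * (k == l)%:R) -> dot x x = 1 ->
  \sum_k dot x (Y *m w k) ^+ 2 / lam k <= 1.
Proof.
move=> yy x1.
pose y k := Y *m w k.
pose c k := dot (y k) x / lam k.
pose t := \sum_k c k *: y k.
have dtx : dot t x = \sum_k dot x (Y *m w k) ^+ 2 / lam k.
  rewrite /t dot_suml; apply: eq_bigr => k _; rewrite dotZl /c /y dotC; ring.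
have dtt : dot t t = \sum_k dot x (Y *m w k) ^+ 2 / lam k.
  rewrite {1}/t dot_suml; apply: eq_bigr => k _; rewrite dotZl /t dot_sumr.
  rewrite (bigD1 k) //= big1 => [|l /negbTE kl]; last by rewrite dotZr /y yy eq_sym kl !mulr0.
  rewrite addr0 dotZr /y yy eqxx mulr1 /c /y dotC.
  have [->|h] := eqVneq (lam k) 0; first by rewrite invr0 !mulr0.
  by field.
have := dot_ge0 (x - t).
rewrite dotBl !dotBr (dotC x t) dtx dtt x1; lra.
Qed.
End Bessel.


Section Lower.
Variable R : realType.

Lemma lower n r (hrn : (r <= n)%N) (A : 'M[R]_n) (B : 'M[R]_r)
    (s : 'I_n -> R) (u : 'I_n -> 'cV[R]_n)
    (d : 'I_r -> R) (v : 'I_r -> 'cV[R]_r) (Y : 'M[R]_(n, r)) :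
  A^T = A -> B^T = B ->
  A = \sum_(i < n) s i *: (u i *m (u i)^T) ->
  \sum_(i < n) u i *m (u i)^T = 1%:M ->
  (forall i j : 'I_n, (i <= j)%N -> s j <= s i) ->
  (forall i : 'I_n, 0 <= s i) ->
  B = \sum_(i < r) d i *: (v i *m (v i)^T) ->
  \sum_(i < r) v i *m (v i)^T = 1%:M ->
  (forall i j : 'I_r, (i <= j)%N -> d i <= d j) ->
  \sum_(i < n) s i ^+ 2 - \sum_(i < r) pospart (s (widen_ord hrn i) - d i) ^+ 2
  <= frob2 (A - Y *m Y^T) + 2 * frob_inner B (Y^T *m Y).
Proof.
move=> AT BT Adef uonb sdec s0 Bdef vonb dinc.
rewrite f_formula //.
set M := Y^T *m Y.
have MT : M^T = M by rewrite /M trmx_mul trmxK.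
have [w [lam [wonb Mdef]]] := spectral_sum MT.
have Mw := onb_eig wonb Mdef.
have Au := onb_eig uonb Adef.
have Bv := onb_eig vonb Bdef.
have uo := onb_orth uonb; have vo := onb_orth vonb; have wo := onb_orth wonb.
have trAA : \tr (A *m A) = \sum_i s i ^+ 2.
  rewrite (onb_trace _ uonb); apply: eq_bigr => i _.
  by rewrite -mulmxA Au -scalemxAr Au !dotZr uo eqxx mulr1 expr2.
pose e i k := dot (u i) (Y *m w k) ^+ 2.
pose q j k := dot (v j) (w k) ^+ 2.
have trAP : \tr (A *m (Y *m Y^T)) = \sum_i s i * \sum_k e i k.
  rewrite (onb_trace _ uonb); apply: eq_bigr => i _.
  rewrite -mulmxA dot_mulmx AT Au dotZl -mulmxA dot_mulmx.
  rewrite -(onb_parseval _ wonb); congr (_ * _); apply: eq_bigr => k _.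
  by rewrite /e dot_mulmx trmxK dotC.
have trMM : \tr (M *m M) = \sum_k lam k ^+ 2.
  rewrite (onb_trace _ wonb); apply: eq_bigr => k _.
  by rewrite -mulmxA Mw -scalemxAr Mw !dotZr wo eqxx mulr1 expr2.
have trBM : \tr (B *m M) = \sum_j d j * \sum_k lam k * q j k.
  rewrite (onb_trace _ vonb); apply: eq_bigr => j _.
  rewrite -mulmxA dot_mulmx BT Bv dotZl; congr (_ * _).
  rewrite Mdef mulmx_suml dot_sumr; apply: eq_bigr => k _.
  by rewrite -scalemxAl -mulmxA mul_dot !dotZr /q (dotC (w k)) expr2 mulrA.
have lamE : forall k, lam k = dot (Y *m w k) (Y *m w k).
  move=> k; rewrite dot_mulmx mulmxA -/M Mw dotZl wo eqxx mulr1 //.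
have e0 : forall i k, 0 <= e i k by move=> i k; apply: sqr_ge0.
have q0 : forall j k, 0 <= q j k by move=> j k; apply: sqr_ge0.
have l0 : forall k, 0 <= lam k by move=> k; rewrite lamE dot_ge0.
have se : forall k, \sum_i e i k = lam k by move=> k; rewrite lamE -(onb_parseval _ uonb).
have sq1 : forall k, \sum_j q j k = 1.
  by move=> k; rewrite /q (onb_parseval _ vonb) wo eqxx.
have sq2 : forall j, \sum_k q j k = 1.
  move=> j; rewrite /q (eq_bigr (fun k => dot (w k) (v j) ^+ 2)); last by move=> k _; rewrite dotC.
  by rewrite (onb_parseval _ wonb) vo eqxx.
have bes : forall i, \sum_k e i k / lam k <= 1.
  move=> i; apply: bessel; last by rewrite uo eqxx.
  by move=> k l; rewrite dot_mulmx mulmxA -/M Mw dotZl wo.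
have K := key hrn sdec s0 dinc e0 q0 l0 se sq1 sq2 bes.
have E : \sum_k (2 * \sum_i s i * e i k - 2 * lam k * \sum_j d j * q j k - lam k ^+ 2)
    = 2 * \sum_i s i * \sum_k e i k - 2 * \sum_j d j * \sum_k lam k * q j k
      - \sum_k lam k ^+ 2.
  have E1 : \sum_k \sum_i s i * e i k = \sum_i s i * \sum_k e i k.
    rewrite exchange_big; apply: eq_bigr => i _; by rewrite mulr_sumr.
  have E2 : \sum_k 2 * lam k * \sum_j d j * q j k = 2 * \sum_j d j * \sum_k lam k * q j k.
    transitivity (\sum_k \sum_j 2 * (d j * (lam k * q j k))).
      by apply: eq_bigr => k _; rewrite mulr_sumr; apply: eq_bigr => j _; ring.
    rewrite exchange_big mulr_sumr; apply: eq_bigr => j _; rewrite !mulr_sumr.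
    by apply: eq_bigr => k _; ring.
  by rewrite !sumrB -mulr_sumr E1 E2.
rewrite trAA trAP trMM trBM; lra.
Qed.
End Lower.


Section Attain.
Variable R : realType.

Lemma attain n r (hrn : (r <= n)%N) (A : 'M[R]_n) (B : 'M[R]_r)
    (s : 'I_n -> R) (u : 'I_n -> 'cV[R]_n)
    (d : 'I_r -> R) (v : 'I_r -> 'cV[R]_r) :
  A^T = A -> B^T = B ->
  A = \sum_(i < n) s i *: (u i *m (u i)^T) ->
  \sum_(i < n) u i *m (u i)^T = 1%:M ->
  B = \sum_(i < r) d i *: (v i *m (v i)^T) ->
  \sum_(i < r) v i *m (v i)^T = 1%:M ->
  let Y := \sum_(i < r)
      Num.sqrt (pospart (s (widen_ord hrn i) - d i))
        *: (u (widen_ord hrn i) *m (v i)^T) in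
  frob2 (A - Y *m Y^T) + 2 * frob_inner B (Y^T *m Y)
  = \sum_(i < n) s i ^+ 2 - \sum_(i < r) pospart (s (widen_ord hrn i) - d i) ^+ 2.
Proof.
move=> AT BT Adef uonb Bdef vonb Y.
rewrite f_formula //.
set M := Y^T *m Y.
pose c i := pospart (s (widen_ord hrn i) - d i).
pose sq i := Num.sqrt (c i).
pose u' i := u (widen_ord hrn i).
have Au := onb_eig uonb Adef.
have Bv := onb_eig vonb Bdef.
have uo := onb_orth uonb; have vo := onb_orth vonb.
have wE : forall i j : 'I_r, (widen_ord hrn i == widen_ord hrn j) = (i == j).
  by move=> i j; rewrite -val_eqE /= val_eqE.
have trAA : \tr (A *m A) = \sum_i s i ^+ 2.
  rewrite (onb_trace _ uonb); apply: eq_bigr => i _.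
  by rewrite -mulmxA Au -scalemxAr Au !dotZr uo eqxx mulr1 expr2.
have Yv : forall j, Y *m v j = sq j *: u' j.
  move=> j; rewrite /Y mulmx_suml (bigD1 j) //= big1 => [|i /negbTE ij].
    by rewrite addr0 -scalemxAl -mulmxA mul_dot vo eqxx scale1r.
  by rewrite -scalemxAl -mulmxA mul_dot vo ij scale0r scaler0.
have YT : Y^T = \sum_i sq i *: (v i *m (u' i)^T).
  rewrite /Y raddf_sum /=; apply: eq_bigr => i _.
  by rewrite linearZ /= trmx_mul trmxK.
have YTu : forall j, Y^T *m u' j = sq j *: v j.
  move=> j; rewrite YT mulmx_suml (bigD1 j) //= big1 => [|i /negbTE ij].
    by rewrite addr0 -scalemxAl -mulmxA mul_dot uo eqxx scale1r.
  by rewrite -scalemxAl -mulmxA mul_dot uo wE ij scale0r scaler0.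
have c0 : forall j, 0 <= c j by move=> j; apply: pos_ge0.
have sqsq : forall j, sq j * sq j = c j by move=> j; rewrite -expr2 sqr_sqrtr.
have Mv : forall j, M *m v j = c j *: v j.
  by move=> j; rewrite /M -mulmxA Yv -scalemxAr YTu scalerA sqsq.
have trAP : \tr (A *m (Y *m Y^T)) = \sum_j c j * s (widen_ord hrn j).
  rewrite mulmxA mxtrace_mulC (onb_trace _ vonb); apply: eq_bigr => j _.
  rewrite -!mulmxA Yv dot_mulmx trmxK Yv -scalemxAr Au dotZl !dotZr uo eqxx mulr1.
  by rewrite mulrA sqsq.
have trMM : \tr (M *m M) = \sum_j c j ^+ 2.
  rewrite (onb_trace _ vonb); apply: eq_bigr => j _.
  by rewrite -mulmxA Mv -scalemxAr Mv !dotZr vo eqxx mulr1 expr2.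
have trBM : \tr (B *m M) = \sum_j c j * d j.
  rewrite (onb_trace _ vonb); apply: eq_bigr => j _.
  by rewrite -mulmxA Mv -scalemxAr Bv !dotZr vo eqxx mulr1.
have csq : \sum_j c j ^+ 2 = \sum_j c j * s (widen_ord hrn j) - \sum_j c j * d j.
  rewrite -sumrB; apply: eq_bigr => j _; rewrite /c pos_sq; ring.
rewrite trAA trAP trMM trBM; rewrite -/c; lra.
Qed.
End Attain.


Theorem theorem19 (R : realType) (n r : nat) (hrn : (r <= n)%N)
    (A : 'M[R]_n) (B : 'M[R]_r)
    (s : 'I_n -> R) (u : 'I_n -> 'cV[R]_n)
    (d : 'I_r -> R) (v : 'I_r -> 'cV[R]_r) :
  A^T = A -> (forall x : 'cV[R]_n, 0 <= (x^T *m A *m x) 0 0) ->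
  B^T = B -> (forall x : 'cV[R]_r, 0 <= (x^T *m B *m x) 0 0) ->
  A = \sum_(i < n) s i *: (u i *m (u i)^T) ->
  \sum_(i < n) u i *m (u i)^T = 1%:M ->
  (forall i j : 'I_n, (i <= j)%N -> s j <= s i) ->
  (forall i : 'I_n, 0 <= s i) ->
  B = \sum_(i < r) d i *: (v i *m (v i)^T) ->
  \sum_(i < r) v i *m (v i)^T = 1%:M ->
  (forall i j : 'I_r, (i <= j)%N -> d i <= d j) ->
  (forall i : 'I_r, 0 <= d i) ->
  let f := fun Y : 'M[R]_(n, r) =>
    frob2 (A - Y *m Y^T) + 2 * frob_inner B (Y^T *m Y) in
  let val := \sum_(i < n) s i ^+ 2
             - \sum_(i < r) pospart (s (widen_ord hrn i) - d i) ^+ 2 in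
  let Ystar := \sum_(i < r)
      Num.sqrt (pospart (s (widen_ord hrn i) - d i))
        *: (u (widen_ord hrn i) *m (v i)^T) in
  (forall Y : 'M[R]_(n, r), val <= f Y) /\ f Ystar = val.
Proof.
move=> AT Apsd BT Bpsd Adef uonb sdec s0 Bdef vonb dinc d0 f val Ystar.
split.
- move=> Y; exact: (lower hrn Y AT BT Adef uonb sdec s0 Bdef vonb dinc).
- exact: (attain hrn AT BT Adef uonb Bdef vonb).
Qed.
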